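(* Let $H=(V,E)$ be an unweighted hypergraph of rank $r$ on $n$ vertices and $k$ a positive integer. Suppose $\textsc{Partition}(G,t)$ is a procedure that, given a hypergraph $G$ and integer $t$, returns a $2t$-light $t$-partition of $G$. Consider the algorithm $\textsc{WeakEdges}(H,k)$: set $E'=\emptyset$; repeat $1+\log_2 n$ times: $E'\leftarrow E'\cup\textsc{Partition}(H,2rk)$ and $H\leftarrow H-E'$; return $E'$. Then $\textsc{WeakEdges}(H,k)$ returns a $4rk$-light set $E'$ (with respect to the input hypergraph $H$) that contains all the $k$-weak edges of $H$, using $O(\log n)$ calls to $\textsc{Partition}$.
   Context: A hypergraph $H=(V,E)$ has edges that are subsets of $V$; its rank is $\max_{e\in E}|e|$. For $U\subseteq V$, $H[U]=(U,\{e\in E:e\subseteq U\})$; for $A\subseteq V$, $\delta_H(A)$ is the set of edges meeting both $A$ and $V\setminus A$; $\lambda(H)=\min_{\emptyset\subsetneq A\subsetneq V}|\delta_H(A)|$. The strength of $e$ is $\gamma_H(e)=\max_{e\subseteq U\subseteq V}\lambda(H[U])$; $e$ is $k$-weak if $\gamma_H(e)<k$. $\kappa(G)$ is the number of connected components of $G$. A set $E'\subseteq E(G)$ is $\ell$-light if $|E'|\le\ell(\kappa(G-E')-\kappa(G))$. An edge $e$ of $G$ is $t$-crisp if there is $X\subseteq V(G)$ with $e\in\delta_G(X)$ and $|\delta_G(X)|<t$. A $t$-partition of $G$ is a set of edges of $G$ containing all $t$-crisp edges of $G$. *)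

(* Defs.v *)
From mathcomp Require Import all_boot.
Set Implicit Arguments. Unset Strict Implicit. Unset Printing Implicit Defensive.

(* A hypergraph is modelled on a fixed finite vertex type V and a finite type
   Ed of edge labels with incidence map inc : Ed -> {set V} (so parallel edges
   are allowed).  A (sub)hypergraph on vertex set V is a set F : {set Ed} of
   edge labels; G - E' is F :\: E'. *)
Section Hyper.
Variables (V Ed : finType) (inc : Ed -> {set V}).

Definition hrank (F : {set Ed}) : nat := \max_(e in F) #|inc e|.

Definition hadj (F : {set Ed}) : rel V :=
  fun x y => [exists e in F, (x \in inc e) && (y \in inc e)].

Definition hcomps (F : {set Ed}) : {set {set V}} :=
  [set [set y | connect (hadj F) x y] | x in [set: V]].
Definition kappa (F : {set Ed}) : nat := #|hcomps F|.

Definition hdelta (F : {set Ed}) (A : {set V}) : {set Ed} :=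
  [set e in F | (inc e :&: A != set0) && (inc e :\: A != set0)].

Definition induced (F : {set Ed}) (U : {set V}) : {set Ed} :=
  [set e in F | inc e \subset U].

(* lambda(H[U]) < k, where lambda(H[U]) = min over nonempty proper A of U of
   |delta_{H[U]}(A)| (= +infinity when there is no such A). *)
Definition lambda_lt (F : {set Ed}) (U : {set V}) (k : nat) : Prop :=
  exists A : {set V}, [/\ A != set0, A \proper U &
                          #|hdelta (induced F U) A| < k].

(* e is k-weak in (V,F): gamma(e) = max_{inc e <= U} lambda(H[U]) < k *)
Definition k_weak (F : {set Ed}) (k : nat) (e : Ed) : Prop :=
  forall U : {set V}, inc e \subset U -> lambda_lt F U k.

Definition light (F E' : {set Ed}) (l : nat) : Prop :=
  E' \subset F /\ #|E'| <= l * (kappa (F :\: E') - kappa F).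

Definition crisp (F : {set Ed}) (t : nat) (e : Ed) : Prop :=
  exists X : {set V}, e \in hdelta F X /\ #|hdelta F X| < t.

Definition t_partition (F : {set Ed}) (t : nat) (S : {set Ed}) : Prop :=
  S \subset F /\ forall e, crisp F t e -> e \in S.

Fixpoint weak_edges_loop (P : {set Ed} -> nat -> {set Ed}) (t m : nat)
    (Hc E' : {set Ed}) : {set Ed} :=
  match m with
  | 0 => E'
  | m'.+1 => let E'' := E' :|: P Hc t in
             weak_edges_loop P t m' (Hc :\: E'') E''
  end.

Definition weak_edges (P : {set Ed} -> nat -> {set Ed}) (F : {set Ed})
    (k : nat) : {set Ed} :=
  weak_edges_loop P (2 * hrank F * k) (trunc_log 2 #|V|).+1 F set0.

End Hyper.

(* Main.v *)
Require Import Defs.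
From mathcomp Require Import all_boot.
From mathcomp Require Import zify.
Set Implicit Arguments. Unset Strict Implicit. Unset Printing Implicit Defensive.

Section Proof.
Variables (V Ed : finType) (inc : Ed -> {set V}) (F : {set Ed}) (k : nat).

Definition kconnb (U : {set V}) : bool :=
  [forall A : {set V}, ((A != set0) && (A \proper U)) ==>
     (k <= #|hdelta inc (induced inc F U) A|)].

Lemma kconnP (U : {set V}) : kconnb U -> ~ lambda_lt inc F U k.
Proof.
move=> /forallP H [A [A0 AU lt]].
move: (H A); rewrite A0 AU /= => hk.
by rewrite ltnNge hk in lt.
Qed.

Lemma kconnPn (U : {set V}) : ~~ kconnb U -> lambda_lt inc F U k.
Proof.
move=> /forallPn [A]; rewrite negb_imply -ltnNge => /andP [/andP [A0 AU] lt].
by exists A; split.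
Qed.

Lemma delta_sub (U1 U A : {set V}) : U1 \subset U ->
  hdelta inc (induced inc F U1) (A :&: U1) \subset hdelta inc (induced inc F U) A.
Proof.
move=> sU; apply/subsetP => e; rewrite !inE => /andP [/andP [eF eU1] /andP [n1 n2]].
rewrite eF (subset_trans eU1 sU) /=.
apply/andP; split.
- move/set0Pn: n1 => [x]; rewrite !inE => /andP [xe /andP [xA _]].
  by apply/set0Pn; exists x; rewrite !inE xe xA.
- move/set0Pn: n2 => [x]; rewrite !inE => /andP [h xe].
  apply/set0Pn; exists x; rewrite !inE xe andbT.
  by move: h; rewrite (subsetP eU1 _ xe) andbT.
Qed.

Lemma split_case (A U : {set V}) x : x \in U ->
  ~~ ((A :&: U != set0) && (A :&: U \proper U)) ->
  if x \in A then U \subset A else A :&: U == set0.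
Proof.
move=> xU; rewrite negb_and negbK properEneq subsetIr andbT negbK.
case xA: (x \in A).
  case/orP => [/eqP h | /eqP h].
  - by move/setP: h => /(_ x); rewrite !inE xA xU.
  - by rewrite -h subsetIl.
case/orP => [-> // | /eqP h].
by move/setP: h => /(_ x); rewrite !inE xA xU.
Qed.

Lemma kconnU (U1 U2 : {set V}) x : kconnb U1 -> kconnb U2 -> x \in U1 -> x \in U2 ->
  kconnb (U1 :|: U2).
Proof.
move=> /forallP k1 /forallP k2 x1 x2; apply/forallP => A; apply/implyP => /andP [A0 AU].
case c1: ((A :&: U1 != set0) && (A :&: U1 \proper U1)).
  move: (k1 (A :&: U1)); rewrite c1 /= => h.
  apply: (leq_trans h); apply/subset_leq_card/delta_sub; exact: subsetUl.
case c2: ((A :&: U2 != set0) && (A :&: U2 \proper U2)).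
  move: (k2 (A :&: U2)); rewrite c2 /= => h.
  apply: (leq_trans h); apply/subset_leq_card/delta_sub; exact: subsetUr.
have h1 := split_case (A:=A) x1 (negbT c1). have h2 := split_case (A:=A) x2 (negbT c2).
case xA: (x \in A) in h1 h2.
- have s : U1 :|: U2 \subset A by rewrite subUset h1 h2.
  by rewrite properE s andbF in AU.
- move: A0; rewrite -(setIidPl (proper_sub AU)) setIUr (eqP h1) (eqP h2) setU0.
  by rewrite eqxx.
Qed.

Lemma kconn1 v : kconnb [set v].
Proof.
apply/forallP => A; apply/implyP => /andP [A0 /proper_card].
by rewrite cards1 ltnS leqn0 cards_eq0 (negbTE A0).
Qed.

Definition M (v : V) : {set V} :=
  [arg max_(U > [set v] | (v \in U) && kconnb U) #|U|].

Lemma MP v : [/\ v \in M v, kconnb (M v) &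
   forall U : {set V}, v \in U -> kconnb U -> #|U| <= #|M v|].
Proof.
rewrite /M; case: arg_maxnP; first by rewrite set11 kconn1.
move=> U /andP [vU kU] h; split => // U' vU' kU'; apply: h; by rewrite vU' kU'.
Qed.

Lemma M_max v (U : {set V}) : v \in U -> kconnb U -> U \subset M v.
Proof.
move=> vU kU; case: (MP v) => vM kM mx.
have kUM : kconnb (M v :|: U) by apply: (kconnU (x:=v)).
have le : #|M v :|: U| <= #|M v| by apply: mx; rewrite // inE vM.
have sub := subsetUl (M v) U.
have e : #|M v| = #|M v :|: U| by apply/eqP; rewrite eqn_leq le subset_leq_card.
move/(subset_cardP e): sub => eq.
apply/subsetP => y yU; rewrite eq inE yU orbT. by [].
Qed.

Lemma M_eq u v : u \in M v -> M u = M v.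
Proof.
move=> uv; case: (MP v) => vM kM _; case: (MP u) => uM kMu _.
have s1 : M v \subset M u := M_max uv kM.
apply/eqP; rewrite eqEsubset s1 andbT.
by apply: M_max => //; apply: (subsetP s1).
Qed.

Definition cls : {set {set V}} := M @: [set: V].

Lemma cls_meet K x : K \in cls -> x \in K -> K = M x.
Proof. by case/imsetP => v _ -> xv; rewrite (M_eq xv). Qed.

Definition Xe : {set Ed} := [set e in F | [forall v, ~~ (inc e \subset M v)]].

Definition cnt (Y : {set V}) := #|[set e in Xe | inc e \subset Y]|.

Lemma kconn_side (K U A : {set V}) : kconnb K -> K \subset U ->
  #|hdelta inc (induced inc F U) A| < k ->
  (K \subset A) || (A :&: K == set0).
Proof.
move=> /forallP kK sKU lt.
case c: ((A :&: K != set0) && (A :&: K \proper K)).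
  move: (kK (A :&: K)); rewrite c /= => h.
  have := leq_trans h (subset_leq_card (@delta_sub K U A sKU)).
  by rewrite leqNgt lt.
move/negbT: c; rewrite negb_and negbK properEneq subsetIr andbT negbK.
case/orP => [-> | /eqP h]; first by rewrite orbT.
by rewrite -h subsetIl.
Qed.

Lemma in_cover (S : {set {set V}}) x : reflect (exists2 K, K \in S & x \in K) (x \in cover S).
Proof. rewrite /cover; apply: (iffP bigcupP) => [[K ? ?]|[K ? ?]]; by exists K. Qed.

Lemma count_bound n : forall S : {set {set V}}, #|S| <= n -> S \subset cls ->
  S != set0 -> cnt (cover S) + k <= k * #|S|.
Proof.
elim: n => [|n IH] S Sn Scls S0.
  by move: Sn; rewrite leqn0 cards_eq0 (negbTE S0).
case: (ltnP 1 #|S|) => [S2 | S1]; last first.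
  have /cards1P [K SK] : #|S| == 1.
    by rewrite eqn_leq S1 lt0n cards_eq0 S0.
  rewrite SK cover1 cards1 muln1.
  have : K \in cls by apply: (subsetP Scls); rewrite SK set11.
  case/imsetP => v _ Kv.
  suff -> : cnt K = 0 by [].
  apply/eqP; rewrite cards_eq0; apply/eqP/setP => e; rewrite !inE.
  apply/negbTE; rewrite negb_and; apply/orP.
  case eF: (e \in F) => /=; last by left.
  case eK: (inc e \subset K); last by right.
  left; apply/forallPn; exists v; by rewrite negbK -Kv.
have nk : ~~ kconnb (cover S).
  apply/negP => kY.
  case/card_gt1P: S2 => K1 [K2 [K1S K2S ne]].
  case/imsetP: (subsetP Scls _ K1S) => v1 _ K1v.
  case/imsetP: (subsetP Scls _ K2S) => v2 _ K2v.
  have v1Y : v1 \in cover S by apply/in_cover; exists K1 => //; rewrite K1v; case: (MP v1).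
  have v2Y : v2 \in cover S by apply/in_cover; exists K2 => //; rewrite K2v; case: (MP v2).
  have := M_eq (subsetP (M_max v1Y kY) _ v2Y).
  by rewrite -K1v -K2v => eq; rewrite eq eqxx in ne.
case: (kconnPn nk) => A [A0 AY lt].
set Y := cover S in AY lt *.
have side : forall K, K \in S -> (K \subset A) || (A :&: K == set0).
  move=> K KS; apply: (kconn_side (U:=Y)) lt.
  - by case/imsetP: (subsetP Scls _ KS) => v _ ->; case: (MP v).
  - by apply/subsetP => x xK; apply/in_cover; exists K.
set Pa := [set K : {set V} | K \subset A].
set SA := S :&: Pa. set SB := S :\: Pa.
have cA : cover SA = A.
  apply/setP => x; apply/idP/idP.
  - by case/in_cover => K; rewrite !inE => /andP [_ KA] xK; apply: (subsetP KA).
  - move=> xA; have : x \in Y by apply: (subsetP (proper_sub AY)).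
    case/in_cover => K KS xK; apply/in_cover; exists K => //.
    rewrite !inE KS /=. case/orP: (side K KS) => // /eqP h.
    by move/setP: h => /(_ x); rewrite !inE xA xK.
have cB : cover SB = Y :\: A.
  apply/setP => x; apply/idP/idP.
  - case/in_cover => K; rewrite !inE => /andP [nKA KS] xK.
    have := side K KS; rewrite (negbTE nKA) /= => /eqP /setP /(_ x).
    rewrite !inE xK andbT => ->; apply/in_cover; by exists K.
  - rewrite inE => /andP [xA xY]; case/in_cover: xY => K KS xK.
    apply/in_cover; exists K => //; rewrite !inE KS andbT.
    apply/negP => KA; by rewrite (subsetP KA _ xK) in xA.
have SA0 : SA != set0.
  case/set0Pn: A0 => x xA; apply/set0Pn.
  move: xA; rewrite -cA => /in_cover [K KS _]; by exists K.
have SB0 : SB != set0.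
  have : Y :\: A != set0.
    apply/negP => /eqP h; move: AY; rewrite properE => /andP [_ /negP]; apply.
    by apply/subsetP => x xY; apply/negPn/negP => xA;
       move/setP: h => /(_ x); rewrite !inE xA xY.
  case/set0Pn => x; rewrite -cB => /in_cover [K KS _]; apply/set0Pn; by exists K.
have card_S : #|SA| + #|SB| = #|S| by rewrite cardsID.
have cSA : 0 < #|SA| by rewrite lt0n cards_eq0.
have cSB : 0 < #|SB| by rewrite lt0n cards_eq0.
have IHA := IH SA ltac:(lia) (subset_trans (subsetIl _ _) Scls) SA0.
have IHB := IH SB ltac:(lia) (subset_trans (subsetDl _ _) Scls) SB0.
rewrite cA in IHA; rewrite cB in IHB.
have sub : [set e in Xe | inc e \subset Y] \subset
   ([set e in Xe | inc e \subset A] :|: [set e in Xe | inc e \subset Y :\: A])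
     :|: hdelta inc (induced inc F Y) A.
  apply/subsetP => e; rewrite !inE => /andP [eX eY].
  case eA: (inc e \subset A); first by rewrite eX.
  case eB: (inc e \subset Y :\: A); first by rewrite eX orbT.
  have eF : e \in F by case/andP: eX.
  rewrite eF eY /= !andbF /=; apply/andP; split.
  - apply/set0Pn; case/subsetPn: eB => x xe xn; exists x.
    rewrite !inE xe /=; move: xn; rewrite !inE (subsetP eY _ xe) andbT.
    by rewrite negbK.
  - apply/set0Pn; case/subsetPn: eA => x xe xn; exists x.
    by rewrite !inE xe xn.
have := subset_leq_card sub.
move: (leq_card_setU ([set e in Xe | inc e \subset A] :|: [set e in Xe | inc e \subset Y :\: A])
   (hdelta inc (induced inc F Y) A)) => [le1 _].
move: (leq_card_setU [set e in Xe | inc e \subset A] [set e in Xe | inc e \subset Y :\: A]) => [le2 _].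
rewrite /cnt in IHA IHB *.
rewrite -card_S mulnDr => le3.
lia.
Qed.


Definition act (G : {set Ed}) : {set {set V}} :=
  [set K in cls | [exists e in G :&: Xe, inc e :&: K != set0]].

Lemma act_sub G : act G \subset cls.
Proof. by apply/subsetP => K; rewrite inE => /andP []. Qed.

Lemma act_mono (G G' : {set Ed}) : G' \subset G -> act G' \subset act G.
Proof.
move=> s; apply/subsetP => K; rewrite !inE => /andP [-> /existsP [e /andP [eG m]]].
apply/existsP; exists e; rewrite m andbT.
by move: eG; rewrite !inE => /andP [/(subsetP s) -> ->].
Qed.

Lemma Xe_out e K : e \in Xe -> K \in cls -> inc e :\: K != set0.
Proof.
rewrite inE => /andP [_ /forallP h] /imsetP [v _ ->].
apply/negP => /eqP h0; move/negP: (h v); apply.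
apply/subsetP => x xe; apply/negPn/negP => xn.
by move/setP: h0 => /(_ x); rewrite !inE xe xn.
Qed.

Lemma crossX f K : K \in cls -> f \in F -> inc f :&: K != set0 ->
  inc f :\: K != set0 -> f \in Xe.
Proof.
move=> Kc fF /set0Pn [x]; rewrite inE => /andP [xf xK] n.
rewrite inE fF /=; apply/forallP => v; apply/negP => s.
have e1 := cls_meet Kc xK.
have e2 : M x = M v by apply: M_eq; apply: (subsetP s).
move: n; rewrite e1 e2; apply/negP/negPn/eqP/setP => y; rewrite !inE.
by case ye: (y \in inc f); rewrite ?andbF // (subsetP s _ ye).
Qed.

Lemma card_sum (T : finType) (A : {set T}) (p : pred T) :
  #|[set x in A | p x]| = \sum_(x in A) p x.
Proof.
rewrite -sum1_card big_mkcond /= [RHS]big_mkcond /=.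
apply: eq_bigr => x _; rewrite inE.
by case: (x \in A); case: (p x).
Qed.

Lemma round (G G' : {set Ed}) : 0 < k -> G \subset F -> G' \subset G ->
  (forall e, crisp inc G (2 * hrank inc F * k) e -> e \notin G') ->
  2 * #|act G'| <= #|act G|.
Proof.
move=> k0 GF sG' hcr.
case: (set_0Vmem (act G')) => [-> | [K0 K0a]]; first by rewrite cards0.
set r := hrank inc F.
have r1 : 0 < r.
  move: K0a; rewrite inE => /andP [_ /existsP [e /andP [eGX /set0Pn [x]]]].
  rewrite inE => /andP [xe _].
  have eF : e \in F.
    by move: eGX; rewrite !inE => /andP [/(subsetP sG') /(subsetP GF) ->].
  apply: (@leq_trans #|inc e|); first by apply/card_gt0P; exists x.
  by rewrite /r /hrank; apply: leq_bigmax_cond.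
set D := G :&: Xe.
pose q (e : Ed) (K : {set V}) : bool := inc e :&: K != set0.
pose d K := #|[set e in D | q e K]|.
set L := [set K in act G | 2 * r * k <= d K].
have sL : act G' \subset L.
  apply/subsetP => K KG'.
  have KG : K \in act G by apply: (subsetP (act_mono sG')).
  move: KG'; rewrite inE => /andP [Kc /existsP [e /andP [eGX m]]].
  move: eGX; rewrite inE => /andP [eG' eX].
  rewrite inE KG /= leqNgt; apply/negP => lt.
  have: e \notin G'; last by rewrite eG'.
  apply: hcr; exists K; split.
  - by rewrite inE (subsetP sG' _ eG') m Xe_out.
  - apply: leq_ltn_trans lt; apply: subset_leq_card; apply/subsetP => f.
    rewrite !inE => /andP [fG /andP [m1 m2]].
    have := crossX Kc (subsetP GF _ fG) m1 m2; rewrite inE => ->.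
    by rewrite fG /q m1.
have s1 : 2 * r * k * #|L| <= \sum_(K in act G) d K.
  rewrite /L card_sum big_distrr /=; apply: leq_sum => K _.
  by case h: (2 * r * k <= d K); rewrite /= ?muln1 ?muln0.
have s2 : \sum_(K in act G) d K <= r * #|D|.
  have -> : \sum_(K in act G) d K = \sum_(K in act G) \sum_(e in D) q e K.
    by apply: eq_bigr => K _; rewrite /d card_sum.
  rewrite exchange_big /= mulnC -sum_nat_const; apply: leq_sum => e eD.
  rewrite -card_sum.
  apply: (@leq_trans #|M @: inc e|).
    apply: subset_leq_card; apply/subsetP => K; rewrite !inE => /andP [KA].
    case/set0Pn => x; rewrite inE => /andP [xe xK]; apply/imsetP; exists x => //.
    by case/andP: KA => Kc _; apply: cls_meet Kc xK.
  apply: leq_trans (leq_imset_card _ _) _.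
  have eF : e \in F by move: eD; rewrite !inE => /andP [_ /andP []].
  by rewrite /r /hrank; apply: leq_bigmax_cond.
have s3 : #|D| + k <= k * #|act G|.
  have AG0 : act G != set0.
    by apply/set0Pn; exists K0; apply: (subsetP (act_mono sG')).
  apply: leq_trans (count_bound (leqnn _) (act_sub G) AG0).
  rewrite leq_add2r; apply: subset_leq_card; apply/subsetP => e eD.
  have eX : e \in Xe by move: eD; rewrite inE => /andP [].
  rewrite inE eX /=; apply/subsetP => x xe; apply/in_cover; exists (M x).
  - rewrite inE; apply/andP; split; first by apply/imsetP; exists x.
    apply/existsP; exists e; rewrite eD /=; apply/set0Pn; exists x.
    by rewrite inE xe; case: (MP x).
  - by case: (MP x).
have s4 : #|act G'| <= #|L| := subset_leq_card sL.
have s5 : r * k * (2 * #|L| + 1) <= r * k * #|act G|.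
  have := leq_trans s1 s2.
  have := leq_mul (leqnn r) s3.
  rewrite !mulnDr !mulnA; lia.
rewrite leq_pmul2l in s5; last by rewrite muln_gt0 r1 k0.
lia.
Qed.


Lemma loop_act (P : {set Ed} -> nat -> {set Ed}) :
  0 < k ->
  (forall G : {set Ed}, G \subset F -> t_partition inc G (2 * hrank inc F * k) (P G (2 * hrank inc F * k))) ->
  forall m (Hc E' : {set Ed}), Hc = F :\: E' ->
  2 ^ m * #|act (F :\: weak_edges_loop P (2 * hrank inc F * k) m Hc E')| <= #|act Hc|.
Proof.
move=> k0 HP; set t := 2 * hrank inc F * k.
elim=> [|m IH] Hc E' eH /=; first by rewrite mul1n eH.
set E'' := E' :|: P Hc t.
have eH' : Hc :\: E'' = F :\: E'' by rewrite eH setDDl setUA setUid.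
have := IH _ _ eH'.
have HcF : Hc \subset F by rewrite eH subsetDl.
have h := @round Hc (Hc :\: E'') k0 HcF (subsetDl _ _).
case: (HP Hc HcF) => _ Hcr.
have h' : 2 * #|act (Hc :\: E'')| <= #|act Hc|.
  apply: h => e c; rewrite inE negb_and negbK; apply/orP; left.
  by rewrite /E'' inE (Hcr e c) orbT.
move=> h2; rewrite expnS -mulnA; apply: leq_trans h'.
by rewrite leq_mul2l h2 orbT.
Qed.

Lemma loop_light (P : {set Ed} -> nat -> {set Ed}) (t : nat) :
  (forall G : {set Ed}, G \subset F -> light inc G (P G t) (2 * t)) ->
  forall m (Hc E' : {set Ed}), Hc = F :\: E' -> E' \subset F ->
  weak_edges_loop P t m Hc E' \subset F /\
  #|weak_edges_loop P t m Hc E'| + 2 * t * kappa inc Hc <=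
     #|E'| + 2 * t * kappa inc (F :\: weak_edges_loop P t m Hc E').
Proof.
move=> HL; elim=> [|m IH] Hc E' eH EF /=; first by rewrite eH.
set Q := P Hc t; set E'' := E' :|: Q.
have HcF : Hc \subset F by rewrite eH subsetDl.
case: (HL Hc HcF) => QH Qle.
have eH' : Hc :\: E'' = F :\: E'' by rewrite eH setDDl setUA setUid.
have E''F : E'' \subset F by rewrite subUset EF (subset_trans QH HcF).
case: (IH _ _ eH' E''F) => RF le; split => //.
have eQ : Hc :\: E'' = Hc :\: Q by rewrite /E'' -setDDl; congr (_ :\: _); rewrite eH setDDl setUid.
have cE : #|E''| <= #|E'| + #|Q| by case: (leq_card_setU E' Q).
set R := weak_edges_loop _ _ _ _ _ in RF le *.
rewrite -eQ in Qle.
set a := kappa inc Hc in le Qle *; set a' := kappa inc (Hc :\: E'') in le Qle.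
case: (leqP a a') => aa.
  have : 2 * t * a <= 2 * t * a' by rewrite leq_mul2l aa orbT.
  move: Qle cE; rewrite /Q mulnBr; lia.
have Q0 : Q = set0.
  by apply/eqP; rewrite -cards_eq0 -leqn0; move: Qle; rewrite (eqP (ltnW aa) : a' - a = 0) muln0.
by move: aa; rewrite /a' /a eQ Q0 setD0 ltnn.
Qed.

End Proof.

Theorem theorem3p3 (V Ed : finType) (inc : Ed -> {set V}) (F : {set Ed})
  (k : nat) (P : {set Ed} -> nat -> {set Ed}) :
  0 < k ->
  (forall (G : {set Ed}) (t : nat), G \subset F ->
     t_partition inc G t (P G t) /\ light inc G (P G t) (2 * t)) ->
  light inc F (weak_edges inc P F k) (4 * hrank inc F * k) /\
  (forall e, e \in F -> k_weak inc F k e -> e \in weak_edges inc P F k).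
Proof.
move=> k0 HP; split.
  have HL : forall G : {set Ed}, G \subset F ->
      light inc G (P G (2 * hrank inc F * k)) (2 * (2 * hrank inc F * k)).
    by move=> G GF; case: (HP G (2 * hrank inc F * k) GF).
  have [RF le] := loop_light HL (trunc_log 2 #|V|).+1 (esym (setD0 F)) (sub0set F).
  split => //.
  rewrite /weak_edges.
  set R := weak_edges_loop _ _ _ _ _ in RF le *.
  have -> : 4 * hrank inc F * k = 2 * (2 * hrank inc F * k) by rewrite !mulnA.
  rewrite cards0 add0n in le; rewrite mulnBr; lia.
move=> e eF ew.
have HT : forall G : {set Ed}, G \subset F ->
    t_partition inc G (2 * hrank inc F * k) (P G (2 * hrank inc F * k)).
  by move=> G GF; case: (HP G (2 * hrank inc F * k) GF).
have h := loop_act k0 HT (trunc_log 2 #|V|).+1 (esym (setD0 F)).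
rewrite /weak_edges; set R := weak_edges_loop _ _ _ _ _ in h *.
have hV : #|act inc F k F| <= #|V|.
  apply: leq_trans (subset_leq_card (act_sub _ _ _ _)) _.
  by apply: leq_trans (leq_imset_card _ _) _; rewrite cardsT.
have lt := trunc_log_ltn #|V| (isT : 1 < 2).
have a0 : #|act inc F k (F :\: R)| = 0.
  move: h; case: #|act inc F k (F :\: R)| => // x; rewrite mulnS; lia.
apply/negPn/negP => eR.
have eX : e \in Xe inc F k.
  rewrite inE eF /=; apply/forallP => v; apply/negP => s.
  case: (MP inc F k v) => _ kM _.
  exact: (kconnP kM (ew _ s)).
have [x xe] : exists x, x \in inc e.
  case: (ew _ (subxx (inc e))) => A [/set0Pn [x xA] /proper_sub s _].
  by exists x; apply: (subsetP s).
have : M inc F k x \in act inc F k (F :\: R).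
  rewrite inE; apply/andP; split; first by apply/imsetP; exists x.
  apply/existsP; exists e; rewrite in_setI in_setD eR eF eX /=.
  by apply/set0Pn; exists x; rewrite inE xe; case: (MP inc F k x).
move=> xin; have : 0 < #|act inc F k (F :\: R)| by apply/card_gt0P; exists (M inc F k x).
by rewrite a0.
Qed.
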